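(* Let $G=(V,E)$ be a finite connected multigraph and let $F,F'$ be spanning 2-forests of $G$. Then the following are equivalent: (1) $F$ and $F'$ are not vertex equivalent; (2) there exists an edge $e\in E(F')$ such that the spanning subgraph with edge set $E(F)\cup\{e\}$ is a tree.
   Context: A spanning 2-forest of $G$ is a subgraph with vertex set $V$, without cycles, having exactly two connected components. For a spanning 2-forest $F$, $\mathcal{P}(F)=\{X,Y\}$ denotes the partition of $V$ into the vertex sets of the two connected components of $F$. Two spanning 2-forests $F,F'$ are vertex equivalent if $\mathcal{P}(F)=\mathcal{P}(F')$. *)

(* Defs.v *)
(* A finite multigraph G = (V, E) is given by finite types of
   vertices V and edges E together with endpoint maps src, tgt : E -> V
   (parallel edges and loops allowed). Spanning subgraphs are identified with
   their edge sets S : {set E}. *)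
From mathcomp Require Import all_boot.
Set Implicit Arguments. Unset Strict Implicit. Unset Printing Implicit Defensive.

Section MultiGraph.
Variables (V E : finType) (src tgt : E -> V).

Definition joins (e : E) (x y : V) : bool :=
  ((src e == x) && (tgt e == y)) || ((src e == y) && (tgt e == x)).

Definition adj (S : {set E}) : rel V := fun x y => [exists e in S, joins e x y].

Definition comp (S : {set E}) (x : V) : {set V} := [set y | connect (adj S) x y].

Definition comp_partition (S : {set E}) : {set {set V}} :=
  [set comp S x | x : V].

Definition n_components (S : {set E}) : nat := #|comp_partition S|.

(* (V, S) contains a cycle: k+1 distinct edges of S and k+1 distinct vertices
   v_0, ..., v_k with edge i joining v_i and v_{i+1 mod k+1}
   (k = 0: a loop; k = 1: two parallel edges). *)
Definition has_cycle (S : {set E}) : Prop :=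
  exists (k : nat) (es : 'I_k.+1 -> E) (vs : 'I_k.+1 -> V),
    [/\ injective es, injective vs, (forall i, es i \in S) &
        (forall i, joins (es i) (vs i) (vs (ordS i)))].

Definition acyclic (S : {set E}) : Prop := ~ has_cycle S.

Definition is_spanning_tree (S : {set E}) : Prop :=
  acyclic S /\ n_components S = 1.

Definition is_spanning_2forest (S : {set E}) : Prop :=
  acyclic S /\ n_components S = 2.

Definition vertex_equivalent (F F' : {set E}) : Prop :=
  comp_partition F = comp_partition F'.

Definition graph_connected : Prop :=
  forall x y : V, connect (adj [set: E]) x y.

End MultiGraph.

(* Main.v *)
From Pilot Require Import Defs.
From mathcomp Require Import all_boot.
From mathcomp Require Import zify.

Set Implicit Arguments. Unset Strict Implicit. Unset Printing Implicit Defensive.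

Section Aux.
Variables (V E : finType) (src tgt : E -> V).

Local Notation adj := (adj src tgt).
Local Notation comp := (Pilot.Defs.comp src tgt).

Lemma joinsC (e : E) (x y : V) : joins src tgt e x y = joins src tgt e y x.
Proof. by rewrite /joins orbC. Qed.

Lemma adj_sym (S : {set E}) : symmetric (adj S).
Proof.
move=> x y; apply/existsP/existsP => -[f /andP[fS j]]; exists f;
  by rewrite fS /= joinsC.
Qed.

Lemma csym (S : {set E}) : connect_sym (adj S).
Proof. exact: sym_connect_sym (adj_sym S). Qed.

Lemma adj_mono (S T : {set E}) : S \subset T -> forall x y, adj S x y -> adj T x y.
Proof.
move=> ST x y /existsP[f /andP[fS j]]; apply/existsP; exists f.
by rewrite (subsetP ST _ fS).
Qed.

Lemma connect_mono (S T : {set E}) : S \subset T -> forall x y,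
  connect (adj S) x y -> connect (adj T) x y.
Proof.
move=> ST; apply: connect_sub => x y h; apply: connect1; exact: adj_mono h.
Qed.

Lemma joins_adj (S : {set E}) (e : E) (x y : V) : e \in S -> joins src tgt e x y -> adj S x y.
Proof. by move=> eS j; apply/existsP; exists e; rewrite eS. Qed.

Lemma adj_src_tgt (S : {set E}) (e : E) : e \in S -> adj S (src e) (tgt e).
Proof. by move=> eS; apply: joins_adj eS _; rewrite /joins !eqxx. Qed.

Lemma compE (S : {set E}) (x y : V) : (comp S x == comp S y) = connect (adj S) x y.
Proof.
apply/eqP/idP => [h|h].
  have : y \in comp S y by rewrite inE connect0.
  by rewrite -h inE.
apply/setP => z; rewrite !inE; apply/idP/idP => hz.
  by rewrite csym in h; apply: connect_trans h hz.
exact: connect_trans h hz.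
Qed.

Lemma two_comps (S : {set E}) : n_components src tgt S = 2 ->
  exists u v, ~~ connect (adj S) u v.
Proof.
move=> h2; have : 1 < #|comp_partition src tgt S| by rewrite /n_components in h2; rewrite h2.
case/card_gt1P => A [B [/imsetP[u _ ->] /imsetP[v _ ->] ne]].
by exists u, v; rewrite -compE.
Qed.

Lemma two_block (S : {set E}) (u v x : V) : n_components src tgt S = 2 ->
  ~~ connect (adj S) u v -> connect (adj S) x u || connect (adj S) x v.
Proof.
move=> h2 nuv; rewrite -!compE; apply/contraT; rewrite negb_or => /andP[nxu nxv].
have sub : comp S x |: [set comp S u; comp S v] \subset comp_partition src tgt S.
  apply/subsetP => A; rewrite !inE => /or3P[]/eqP->; exact: imset_f.
have := subset_leq_card sub; rewrite /n_components in h2; rewrite h2.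
rewrite cardsU1 cards2 !inE (negbTE nxu) (negbTE nxv) /=.
by rewrite compE (negbTE nuv).
Qed.

Lemma cycle_connect (r : rel V) k (vs : 'I_k.+1 -> V) (i : 'I_k.+1) :
  connect_sym r ->
  (forall j, j != i -> r (vs j) (vs (ordS j))) ->
  connect r (vs i) (vs (ordS i)).
Proof.
move=> rs H.
pose g n := vs (inord n).
have gi : forall j : 'I_k.+1, vs j = g j by move=> j; rewrite /g inord_val.
have step : forall n, n < k -> inord n != i -> r (g n) (g n.+1).
  move=> n nk ni; have := H _ ni; congr (r _ (vs _)); apply: val_inj.
  rewrite /= !inordK ?modn_small //; apply: leq_trans nk _; exact: leqnSn.
have stepk : inord k != i -> r (g k) (g 0).
  move=> ni; have := H _ ni; congr (r _ (vs _)); apply: val_inj.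
  by rewrite /= !inordK // modnn.
have A : forall n, n <= i -> connect r (g 0) (g n).
  elim=> [|n IH] hn; first exact: connect0.
  have nk : n < k by exact: leq_trans hn (leq_ord i).
  apply: connect_trans (IH (ltnW hn)) (connect1 _).
  apply: step => //.
  apply/eqP => e; move: hn; rewrite -e inordK ?ltnn //; exact: ltnW.
have B : forall d n, i < n -> n + d = k -> connect r (g n) (g 0).
  elim=> [|d IH] n hin hk.
    rewrite addn0 in hk; subst n; apply: connect1; apply: stepk.
    apply/eqP => e; move: hin; by rewrite -e inordK ?ltnn.
  have nk : n < k by lia.
  have hn1 : i < n.+1 by lia.
  apply: connect_trans (connect1 (step n nk _)) (IH n.+1 hn1 _); last lia.
  apply/eqP => e; move: hin; rewrite -e inordK; lia.
have gA : connect r (g 0) (vs i) by rewrite gi; exact: A.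
case: (ltngtP i k) => [ik | ki | ik].
- have -> : ordS i = inord i.+1.
    by apply: val_inj; rewrite /= inordK ?modn_small.
  rewrite rs; apply: connect_trans (B (k - i.+1) i.+1 (ltnSn _) _) _.
    by rewrite subnKC.
  exact: gA.
- by move: (ltn_ord i); rewrite ltnS leqNgt ki.
- have -> : ordS i = inord 0.
    by apply: val_inj; rewrite /= inordK // ik modnn.
  rewrite rs; exact: gA.
Qed.

End Aux.

Theorem proposition2p2 (V E : finType) (src tgt : E -> V)
  (Gconn : graph_connected src tgt) (F F' : {set E})
  (HF : is_spanning_2forest src tgt F) (HF' : is_spanning_2forest src tgt F') :
  ~ vertex_equivalent src tgt F F' <->
  exists e, e \in F' /\ is_spanning_tree src tgt (e |: F).
Proof.
case: HF => acF nF; case: HF' => acF' nF'.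
split.
- move=> nve.
  case: (boolP [exists e in F', ~~ connect (adj src tgt F) (src e) (tgt e)]).
  + move/exists_inP => [e eF' nc]; exists e; split => //; split.
    * move=> [k [es [vs [ies ivs inS J]]]].
      case: (boolP [exists i, es i == e]).
      - move/existsP => [i /eqP ei].
        have C : connect (adj src tgt F) (vs i) (vs (ordS i)).
          apply: cycle_connect (csym src tgt F) _ => j ji.
          have := inS j; rewrite in_setU1 => /orP[/eqP ej|ejF].
            by move: ji; rewrite (ies j i) ?eqxx // ej ei.
          exact: joins_adj ejF (J j).
        have := J i; rewrite ei /joins => /orP[/andP[/eqP s /eqP t]|/andP[/eqP s /eqP t]];
          move: nc; rewrite s t ?C //.
        by rewrite (csym src tgt F) C.
      - move=> nex; apply: acF; exists k, es, vs; split => // i.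
        have := inS i; rewrite in_setU1 => /orP[/eqP ei|] //.
        by move: nex; rewrite negb_exists => /forallP /(_ i); rewrite ei eqxx.
    * have all : forall x, connect (adj src tgt (e |: F)) x (src e).
        move=> x; case/orP: (two_block x nF nc) => h.
          by apply: connect_mono h; exact: subsetUr.
        apply: connect_trans (connect_mono _ h) (connect1 _); first exact: subsetUr.
        by rewrite adj_sym; apply: adj_src_tgt; exact: setU11.
      rewrite /n_components (_ : comp_partition _ _ _ =
         [set Pilot.Defs.comp src tgt (e |: F) (src e)]) ?cards1 //.
      apply/setP => A; rewrite inE; apply/imsetP/eqP => [[x _ ->]|->].
        by apply/eqP; rewrite compE; exact: all.
      by exists (src e).
  + move=> nex; exfalso; apply: nve.
    have sub : forall x y, connect (adj src tgt F') x y -> connect (adj src tgt F) x y.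
      apply: connect_sub => x y /existsP[f /andP[fF' j]].
      have : connect (adj src tgt F) (src f) (tgt f).
        by move: nex; rewrite negb_exists_in => /forall_inP/(_ f fF'); rewrite negbK.
      move: j; rewrite /joins => /orP[/andP[/eqP<- /eqP<-]|/andP[/eqP<- /eqP<-]] //.
      by rewrite (csym src tgt F).
    have eqc : forall x y, connect (adj src tgt F) x y -> connect (adj src tgt F') x y.
      move=> x y cxy; apply/contraT => nxy.
      have [u [v nuv]] := two_comps nF.
      have hu := two_block u nF' nxy; have hv := two_block v nF' nxy.
      have hu' : connect (adj src tgt F) u x.
        case/orP: hu => /sub h //; apply: connect_trans h _; by rewrite (csym src tgt F).
      have hv' : connect (adj src tgt F) v x.
        case/orP: hv => /sub h //; apply: connect_trans h _; by rewrite (csym src tgt F).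
      move: nuv; rewrite (connect_trans hu' (_ : connect (adj src tgt F) x v)) //.
      by rewrite (csym src tgt F).
    rewrite /vertex_equivalent /comp_partition; apply: eq_imset => x.
    apply/setP => y; rewrite !inE; apply/idP/idP; [exact: eqc | exact: sub].
- move=> [e [eF' [_ n1]]] ve.
  have : Pilot.Defs.comp src tgt F' (src e) \in comp_partition src tgt F.
    by rewrite ve; exact: imset_f.
  case/imsetP => z _ hz.
  have cs : connect (adj src tgt F) z (src e).
    have : src e \in Pilot.Defs.comp src tgt F' (src e) by rewrite inE connect0.
    by rewrite hz inE.
  have ct : connect (adj src tgt F) z (tgt e).
    have : tgt e \in Pilot.Defs.comp src tgt F' (src e).
      by rewrite inE connect1 // adj_src_tgt.
    by rewrite hz inE.
  have cst : connect (adj src tgt F) (src e) (tgt e).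
    by apply: connect_trans ct; rewrite (csym src tgt F).
  have eqp : comp_partition src tgt (e |: F) = comp_partition src tgt F.
    apply: eq_imset => x; apply/setP => y; rewrite !inE; apply/idP/idP.
      apply: connect_sub => a b /existsP[f /andP[]].
      rewrite in_setU1 => /orP[/eqP-> | fF] j.
        move: j; rewrite /joins => /orP[/andP[/eqP<- /eqP<-]|/andP[/eqP<- /eqP<-]] //.
        by rewrite (csym src tgt F).
      exact: connect1 (joins_adj fF j).
    by apply: connect_mono; exact: subsetUr.
  by move: n1 nF; rewrite /n_components eqp => ->.
Qed.
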